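(* Let $(\mathcal B,<)$ be a monoidal poset, $B\in\mathcal B$, and $i\sim j$ nodes with $r_ir_jB=r_jB$. If $r_iB<B$ and $r_jB<B$, then $\alpha_i+\alpha_j\in B$.
   Context: Setting: $M$ is a spherical simply laced Coxeter diagram with nodes $1,\dots,n$ ($i\sim j$: distinct adjacent nodes; $i\not\sim j$ otherwise); $W$ its Weyl group with positive roots $\Phi^+$, fundamental roots $\alpha_i$, reflections $r_i$, inner product with $(\alpha_i,\alpha_i)=2$, $(\alpha_i,\alpha_j)=-1$ if $i\sim j$, $0$ otherwise; height $\mathrm{ht}(\sum a_k\alpha_k)=\sum a_k$. For a set $B$ of mutually orthogonal positive roots, $wB=\Phi^+\cap\{\pm w\beta:\beta\in B\}$. A $W$-orbit $\mathcal B$ of such sets is admissible if for every $B\in\mathcal B$, all nodes $i\not\sim j$ and root $\gamma$ with $\gamma,\gamma-\alpha_i+\alpha_j\in B$, $r_iB=r_jB$. For $B,C\in\mathcal B$ write $B\prec C$ if $B\ne C$ and the minimal height of an element of $B\setminus C$ is strictly smaller than the minimal height of an element of $C\setminus B$. For admissible $\mathcal B$, the monoidal poset $(\mathcal B,<)$ is $\mathcal B$ with the partial order $<$ given by the transitive closure of the relation $\{(B,r_jB): B\in\mathcal B,\ j\text{ a node},\ B\prec r_jB\}$; $>$ denotes the reverse relation. *)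

(* Defs.v *)
From mathcomp Require Import all_boot all_order all_algebra finmap.
From Stdlib Require Import Relations.Relation_Operators.
Set Implicit Arguments. Unset Strict Implicit. Unset Printing Implicit Defensive.
Import GRing.Theory Num.Theory.
Local Open Scope ring_scope.
Local Open Scope fset_scope.

(* Coxeter diagram on nodes 'I_n given by an adjacency relation [e]
   (assumed symmetric and irreflexive); [e i j] means i ~ j.
   Vectors of the root lattice are written in the basis of fundamental
   roots: v = \sum_k v 0 k * alpha_k, as integer row vectors. *)

Section Roots.
Variables (n : nat) (e : rel 'I_n).

Definition cartan (k l : 'I_n) : int :=
  if k == l then 2 else if e k l then -1 else 0.

Definition root_ip (u v : 'rV[int]_n) : int :=
  \sum_(k < n) \sum_(l < n) u 0 k * v 0 l * cartan k l.

Definition alpha (i : 'I_n) : 'rV[int]_n := delta_mx 0 i.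

Definition height (v : 'rV[int]_n) : int := \sum_(k < n) v 0 k.

Definition spherical : Prop :=
  forall v : 'rV[int]_n, v != 0 -> 0 < root_ip v v.

Definition refl (i : 'I_n) (v : 'rV[int]_n) : 'rV[int]_n :=
  v - (root_ip v (alpha i)) *: alpha i.

(* an element of W given as a word in the simple reflections,
   acting by w = r_(w_1) ... r_(w_k) *)
Definition actw (w : seq 'I_n) (v : 'rV[int]_n) : 'rV[int]_n :=
  foldr refl v w.

Definition is_root (v : 'rV[int]_n) : Prop :=
  exists (w : seq 'I_n) (i : 'I_n), v = actw w (alpha i).

Definition pos_vec (v : 'rV[int]_n) : bool := [forall k, 0 <= v 0 k].

Definition pos_root (v : 'rV[int]_n) : Prop := is_root v /\ pos_vec v.

Definition orth_pos_set (B : {fset 'rV[int]_n}) : Prop :=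
  (forall b, b \in B -> pos_root b) /\
  (forall b c, b \in B -> c \in B -> b != c -> root_ip b c = 0).

(* wB = Phi^+ \cap {+- w beta : beta in B}; for B a set of roots the
   vectors +- w beta are roots, so intersecting with Phi^+ amounts to
   keeping the ones with nonnegative coordinates *)
Definition act_set (w : seq 'I_n) (B : {fset 'rV[int]_n}) : {fset 'rV[int]_n} :=
  [fset x in ([seq actw w b | b <- B] ++ [seq - actw w b | b <- B]) | pos_vec x].

Definition rset (j : 'I_n) (B : {fset 'rV[int]_n}) := act_set [:: j] B.

Definition in_Worbit (B0 B : {fset 'rV[int]_n}) : Prop :=
  exists w : seq 'I_n, B = act_set w B0.

Definition admissible (B0 : {fset 'rV[int]_n}) : Prop :=
  forall B, in_Worbit B0 B ->
  forall (i j : 'I_n), ~~ e i j ->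
  forall g, g \in B -> (g - alpha i + alpha j)%R \in B -> rset i B = rset j B.

(* B \prec C: B <> C and min height of B \ C < min height of C \ B
   (min over the empty set being +infinity) *)
Definition prec (B C : {fset 'rV[int]_n}) : Prop :=
  B <> C /\
  exists2 b, b \in B `\` C &
    forall c, c \in C `\` B -> height b < height c.

Definition mstep (B0 : {fset 'rV[int]_n}) (X Y : {fset 'rV[int]_n}) : Prop :=
  in_Worbit B0 X /\ (exists j, Y = rset j X) /\ prec X Y.

Definition mlt (B0 : {fset 'rV[int]_n}) : {fset 'rV[int]_n} -> {fset 'rV[int]_n} -> Prop :=
  clos_trans _ (mstep B0).

End Roots.

(* Main.v *)
Require Import Defs.
From mathcomp Require Import all_boot all_order all_algebra finmap zify ring lra.
From Stdlib Require Import Relations.Relation_Operators.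
Import GRing.Theory Num.Theory.
Local Open Scope fset_scope.
Local Open Scope ring_scope.

Section Aux.
Variables (n : nat) (e : rel 'I_n).
Hypothesis e_sym : symmetric e.
Hypothesis e_irr : irreflexive e.
Local Notation ip := (root_ip e).
Local Notation V := 'rV[int]_n.

Lemma ipDl (u v w : V) : ip (u + v) w = ip u w + ip v w.
Proof.
rewrite /root_ip -big_split; apply: eq_bigr => k _.
rewrite -big_split; apply: eq_bigr => l _; by rewrite mxE !mulrDl.
Qed.

Lemma ipZl (a : int) (u w : V) : ip (a *: u) w = a * ip u w.
Proof.
rewrite /root_ip mulr_sumr; apply: eq_bigr => k _.
rewrite mulr_sumr; apply: eq_bigr => l _; rewrite mxE; ring.
Qed.

Lemma ipNl (u w : V) : ip (- u) w = - ip u w.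
Proof. by rewrite -scaleN1r ipZl mulN1r. Qed.

Lemma ipBl (u v w : V) : ip (u - v) w = ip u w - ip v w.
Proof. by rewrite ipDl ipNl. Qed.

Lemma cartanC (k l : 'I_n) : cartan e k l = cartan e l k.
Proof. by rewrite /cartan eq_sym e_sym. Qed.

Lemma ipC (u v : V) : ip u v = ip v u.
Proof.
rewrite /root_ip exchange_big; apply: eq_bigr => k _.
apply: eq_bigr => l _; rewrite cartanC; ring.
Qed.

Lemma ipDr (u v w : V) : ip w (u + v) = ip w u + ip w v.
Proof. by rewrite ipC ipDl !(ipC w). Qed.
Lemma ipNr (u w : V) : ip w (- u) = - ip w u.
Proof. by rewrite ipC ipNl ipC. Qed.
Lemma ipBr (u v w : V) : ip w (u - v) = ip w u - ip w v.
Proof. by rewrite ipDr ipNr. Qed.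
Lemma ipZr (a : int) (u w : V) : ip w (a *: u) = a * ip w u.
Proof. by rewrite ipC ipZl ipC. Qed.

Lemma alphaE (i k : 'I_n) : alpha i 0 k = (k == i)%:R.
Proof. by rewrite /alpha mxE eqxx. Qed.

Lemma ip_alpha (u : V) i : ip u (alpha i) = \sum_k u 0 k * cartan e k i.
Proof.
rewrite /root_ip; apply: eq_bigr => k _.
rewrite (bigD1 i) //= big1 ?addr0; first by rewrite alphaE eqxx mulr1.
by move=> l /negbTE hl; rewrite alphaE hl mulr0 mul0r.
Qed.

Lemma ip_aa (i j : 'I_n) : ip (alpha i) (alpha j) = cartan e i j.
Proof.
rewrite ip_alpha (bigD1 i) //= big1 ?addr0; first by rewrite alphaE eqxx mul1r.
by move=> l /negbTE hl; rewrite alphaE hl mul0r.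
Qed.

Lemma cartan_ii (i : 'I_n) : cartan e i i = 2.
Proof. by rewrite /cartan eqxx. Qed.
Lemma cartan_adj (i j : 'I_n) : e i j -> cartan e i j = -1.
Proof.
move=> h; rewrite /cartan h; case: eqP => // eij.
by move: h; rewrite eij e_irr.
Qed.

Lemma heightD (u v : V) : height (u + v) = height u + height v.
Proof. by rewrite /height -big_split; apply: eq_bigr => k _; rewrite mxE. Qed.
Lemma heightN (u : V) : height (- u) = - height u.
Proof. by rewrite /height -sumrN; apply: eq_bigr => k _; rewrite mxE. Qed.
Lemma heightB (u v : V) : height (u - v) = height u - height v.
Proof. by rewrite heightD heightN. Qed.
Lemma height_alpha (i : 'I_n) : height (alpha i) = 1.
Proof.
rewrite /height (bigD1 i) //= big1 ?addr0; first by rewrite alphaE eqxx.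
by move=> l /negbTE hl; rewrite alphaE hl.
Qed.

Lemma refl_inv i (u v : V) : ip (refl e i u) (refl e i v) = ip u v.
Proof.
rewrite /refl !(ipBl, ipBr, ipZl, ipZr) ip_aa cartan_ii (ipC (alpha i) v).
ring.
Qed.

Lemma reflN i (u : V) : refl e i (- u) = - refl e i u.
Proof. by rewrite /refl ipNl scaleNr opprB opprK addrC. Qed.

Lemma reflK i (u : V) : refl e i (refl e i u) = u.
Proof.
rewrite {1}/refl ipBl ipZl ip_aa cartan_ii /refl.
have -> : ip u (alpha i) - ip u (alpha i) * 2 = - ip u (alpha i) by ring.
by rewrite scaleNr opprK subrK.
Qed.

Lemma actw_inv w (u v : V) : ip (actw e w u) (actw e w v) = ip u v.
Proof. by elim: w => //= k w IH; rewrite refl_inv. Qed.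

Lemma actwN w (u : V) : actw e w (- u) = - actw e w u.
Proof. by elim: w => //= k w IH; rewrite IH reflN. Qed.

Lemma root_norm (v : V) : is_root e v -> ip v v = 2.
Proof. by case=> w [i ->]; rewrite actw_inv ip_aa cartan_ii. Qed.


Lemma ip0l (w : V) : ip 0 w = 0.
Proof. by rewrite -(scale0r (0 : V)) ipZl mul0r. Qed.

Lemma ip_even (u : V) : exists m, ip u u = 2 * m.
Proof.
rewrite (row_sum_delta u).
apply: (big_ind (fun x : V => exists m, ip x x = 2 * m)).
- by exists 0; rewrite ip0l mulr0.
- move=> x y [mx hx] [my hy]; exists (mx + ip x y + my).
  rewrite !(ipDl, ipDr) hx hy (ipC y x); ring.
- move=> j _; exists (u 0 j * u 0 j).
  rewrite ipZl ipZr [ip _ _]ip_aa cartan_ii; ring.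
Qed.

Hypothesis sph : spherical e.

Lemma ip_ge2 (u : V) : u != 0 -> 2 <= ip u u.
Proof.
move=> /sph h; have [m hm] := ip_even u; move: h; rewrite hm => h; lia.
Qed.

Lemma pos_neg0 (v : V) : pos_vec v -> pos_vec (- v) -> v = 0.
Proof.
move=> /forallP h1 /forallP h2; apply/rowP => k.
have := h1 k; have := h2 k; rewrite !mxE; set x := v 0 k => a b. lia.
Qed.

Lemma pos_h0 (v : V) : pos_vec v -> height v = 0 -> v = 0.
Proof.
move=> /forallP h1 h0; apply/rowP => k; rewrite mxE.
by apply: (psumr_eq0P (P := predT) (F := fun k => v 0 k)) => // l _; apply: h1.
Qed.

Lemma norm2_sign (v : V) : ip v v = 2 -> pos_vec v \/ pos_vec (- v).
Proof.
move=> hv.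
case hp: (pos_vec v); first by left.
case hn: (pos_vec (- v)); first by right.
exfalso.
move/negbT: hp => /forallPn [l hl].
move/negbT: hn => /forallPn [k hk].
rewrite mxE in hk.
pose p : V := \row_a (if 0 <= v 0 a then v 0 a else 0).
pose q : V := \row_a (if 0 <= v 0 a then 0 else - v 0 a).
have epq : v = p - q.
  apply/rowP => a; rewrite !mxE; case: ifP => _; ring.
have p0 : p != 0.
  apply/eqP => /rowP /(_ k); rewrite !mxE; move: hk; set x : int := v 0 k.
  case: ifP => h; lia.
have q0 : q != 0.
  apply/eqP => /rowP /(_ l); rewrite !mxE; move: hl; set y : int := v 0 l.
  case: ifP => h; lia.
have hpq : ip p q <= 0.
  rewrite /root_ip; apply: sumr_le0 => a _; apply: sumr_le0 => b _.
  rewrite !mxE /cartan; case: eqP => [<-|ab].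
    by case: ifP => h1; rewrite ?mul0r ?mulr0.
  set xa : int := v 0 a; set xb : int := v 0 b.
  case: ifP => h1; case: ifP => h2; case: (e a b); nia.
have := ip_ge2 _ p0; have := ip_ge2 _ q0.
move: hv; rewrite epq !(ipBl, ipBr) (ipC q p) => hv; lia.
Qed.

Lemma norm2_neq0 (v : V) : ip v v = 2 -> v != 0.
Proof. by move=> h; apply/eqP => v0; move: h; rewrite v0 ip0l. Qed.

Lemma ip_le1 (x y : V) : ip x x = 2 -> ip y y = 2 -> x != y -> ip x y <= 1.
Proof.
move=> hx hy; rewrite -subr_eq0 => /sph.
rewrite !(ipBl, ipBr) hx hy (ipC y x) => h; lia.
Qed.


Definition good (X : {fset V}) :=
  (forall x, x \in X -> pos_vec x /\ ip x x = 2) /\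
  (forall x y, x \in X -> y \in X -> x != y -> ip x y = 0).

Lemma mem_act (y : V) w (X : {fset V}) :
  y \in act_set e w X <->
  pos_vec y /\ exists2 x, x \in X & (y = actw e w x \/ y = - actw e w x).
Proof.
rewrite /act_set !inE mem_cat; split.
  move=> /andP[/orP[/mapP[x hx ->]|/mapP[x hx ->]] hp]; split=> //.
    by exists x => //; left.
  by exists x => //; right.
move=> [hp [x hx [ey|ey]]]; subst y; rewrite hp andbT; apply/orP.
  by left; apply/mapP; exists x.
by right; apply/mapP; exists x.
Qed.

Lemma mem_rset (y : V) j (X : {fset V}) :
  y \in rset e j X <->
  pos_vec y /\ exists2 x, x \in X & (y = refl e j x \/ y = - refl e j x).
Proof. exact: mem_act. Qed.

Lemma good_act w X : good X -> good (act_set e w X).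
Proof.
move=> [h1 h2]; split.
  move=> y /mem_act [hp [x hx hy]]; split=> //.
  have := (h1 x hx).2; case: hy => ->; rewrite ?(ipNl, ipNr) actw_inv ?opprK //.
move=> y z /mem_act [hy [x hx ey]] /mem_act [hz [x' hx' ez]] neq.
have [exx'|nxx'] := eqVneq x x'.
  subst x'; exfalso.
  have n2 := (h1 x hx).2.
  have hnz : actw e w x != 0 by apply: norm2_neq0; rewrite actw_inv.
  move: hnz; case: ey => ey; case: ez => ez; subst y z; rewrite ?eqxx // in neq.
    by rewrite (pos_neg0 _ hy hz) eqxx.
  by rewrite -[actw e w x]opprK (pos_neg0 _ hy) ?opprK // oppr0 eqxx.
have := h2 x x' hx hx' nxx'.
by case: ey => ->; case: ez => ->; rewrite ?(ipNl, ipNr) actw_inv => ->; rewrite ?oppr0.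
Qed.

Lemma refl_pos (b : V) k : pos_vec b -> ip b b = 2 ->
  ip b (alpha k) * ip b (alpha k) = 1 -> pos_vec (refl e k b).
Proof.
move=> hp hn hs.
have := norm2_sign (refl e k b); rewrite refl_inv => /(_ hn) [//|hneg].
exfalso.
have z : forall l, l != k -> b 0 l = 0.
  move=> l lk; move/forallP: hneg => /(_ l); move/forallP: hp => /(_ l).
  rewrite /refl !mxE eqxx (negbTE lk) /= mulr0 subr0.
  set x : int := b 0 l => h1 h2; lia.
move: hs; rewrite ip_alpha (bigD1 k) //= big1 ?addr0 ?cartan_ii.
  set x : int := b 0 k => h; lia.
move=> l lk; by rewrite z ?mul0r.
Qed.

Lemma reflE (x : V) k : refl e k x = x - ip x (alpha k) *: alpha k.
Proof. by []. Qed.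

Lemma ip_refl_alpha (x : V) k : ip (refl e k x) (alpha k) = - ip x (alpha k).
Proof. rewrite reflE ipBl ipZl ip_aa cartan_ii; ring. Qed.

Lemma rset_moved X (x : V) k : good X -> x \in X ->
  ip x (alpha k) * ip x (alpha k) = 1 -> x \notin rset e k X.
Proof.
move=> [h1 h2] hx hs; apply/negP => /mem_rset [hp [x' hx' ex]].
have n2 := (h1 x' hx').2.
have es : ip x (alpha k) * ip x (alpha k) = ip x' (alpha k) * ip x' (alpha k).
  by case: ex => ->; rewrite ?ipNl ip_refl_alpha; ring.
have ipxx' : ip x x' = 1 \/ ip x x' = -1.
  have e1 : ip (refl e k x') x' = 2 - ip x' (alpha k) * ip x' (alpha k).
    by rewrite reflE ipBl ipZl n2 (ipC (alpha k)).
  by case: ex => ->; rewrite ?ipNl e1 -es hs; [left|right].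
have [exx'|nxx'] := eqVneq x x'.
  by subst x'; move: ipxx'; rewrite (h1 x hx).2 => -[] h; lia.
by move: ipxx'; rewrite (h2 x x' hx hx' nxx') => -[] h; lia.
Qed.

Definition Q (X Y : {fset V}) :=
  exists2 b, b \in X `\` Y & forall c, c \in Y `\` X -> height b < height c.

Lemma Q_trans X Y Z : Q X Y -> Q Y Z -> Q X Z.
Proof.
move=> [x hx hxm] [y hy hym].
move: hx hy; rewrite !inE => /andP[xY xX] /andP[yZ yY].
have [hle|hlt] := lerP (height x) (height y).
  have xZ : x \notin Z.
    apply/negP => xZ.
    have := hym x; rewrite !inE xZ xY => /(_ isT); lia.
  exists x; first by rewrite !inE xZ xX.
  move=> c; rewrite !inE => /andP[cX cZ].
  case cY: (c \in Y).
    by apply: hxm; rewrite !inE cX cY.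
  have := hym c; rewrite !inE cY cZ => /(_ isT); lia.
have yX : y \in X.
  case yXb: (y \in X) => //; move: (hxm y); rewrite !inE yXb yY => /(_ isT); lia.
exists y; first by rewrite !inE yZ yX.
move=> c; rewrite !inE => /andP[cX cZ].
case cY: (c \in Y).
  have := hxm c; rewrite !inE cX cY => /(_ isT); lia.
by apply: hym; rewrite !inE cY cZ.
Qed.

Lemma mlt_Q B0 X Y : mlt e B0 X Y -> Q X Y.
Proof.
elim=> [x y [_ [_ [_ h]]]|x y z _ h1 _ h2] //.
exact: Q_trans h1 h2.
Qed.


Lemma heightZ (a : int) (u : V) : height (a *: u) = a * height u.
Proof. by rewrite /height mulr_sumr; apply: eq_bigr => k _; rewrite mxE. Qed.

Lemma alpha_npos (k : 'I_n) : ~~ pos_vec (- alpha k).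
Proof. by apply/forallP => /(_ k); rewrite mxE alphaE eqxx. Qed.

Lemma extract (B : {fset V}) (k : 'I_n) : good B -> alpha k \notin B -> Q (rset e k B) B ->
  exists2 b, b \in B & ip b (alpha k) = 1 /\
    (forall c, c \in B -> c \notin rset e k B -> height b - 1 < height c).
Proof.
move=> gB nk [bb hbb hmin]; move: hbb; rewrite in_fsetD => /andP[bbB bbR].
have [hp [b hb eb]] := (mem_rset _ _ _).1 bbR.
have [pb nb] := gB.1 b hb.
have s0 : ip b (alpha k) <> 0.
  move=> s0; have rb : refl e k b = b by rewrite reflE s0 scale0r subr0.
  case: eb; rewrite rb => eb; subst bb; first by rewrite hb in bbB.
  by have := norm2_neq0 _ nb; rewrite (pos_neg0 _ pb hp) eqxx.
have bk : b != alpha k by apply: contraNneq nk => <-.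
have bnk : b != - alpha k.
  by apply: contraNneq (alpha_npos k) => <-.
have na : ip (alpha k) (alpha k) = 2 by rewrite ip_aa cartan_ii.
have nna : ip (- alpha k) (- alpha k) = 2 by rewrite ipNl ipNr opprK.
have s1 := ip_le1 _ _ nb na bk.
have s2 := ip_le1 _ _ nb nna bnk; rewrite ipNr in s2.
have ss : ip b (alpha k) * ip b (alpha k) = 1 by nia.
have rp := refl_pos _ _ pb nb ss.
have ebb : bb = refl e k b.
  case: eb => // eb; exfalso; subst bb.
  have := norm2_neq0 (refl e k b); rewrite refl_inv => /(_ nb).
  by rewrite (pos_neg0 _ rp hp) eqxx.
have bnR := rset_moved _ _ _ gB hb ss.
have := hmin b; rewrite in_fsetD bnR hb => /(_ isT).
rewrite ebb reflE heightB heightZ height_alpha => hlt.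
exists b => //; split; first by nia.
move=> c hc hcR; have := hmin c; rewrite in_fsetD hcR hc => /(_ isT).
rewrite ebb reflE heightB heightZ height_alpha; nia.
Qed.


Lemma main_aux (B0 B : {fset V}) (i j : 'I_n) :
  orth_pos_set e B0 -> in_Worbit e B0 B -> e i j ->
  rset e i (rset e j B) = rset e j B ->
  Q (rset e i B) B -> Q (rset e j B) B -> (alpha i + alpha j)%R \in B.
Proof.
move=> hB0 [w hw] hij hcomm Qi Qj.
have gB0 : good B0.
  case: hB0 => h1 h2; split=> // x hx; have [hr hp] := h1 x hx; split=> //.
  exact: root_norm.
have gB : good B by rewrite hw; apply: good_act.
have gC : good (rset e j B) by apply: good_act.
have nij : i != j by apply: contraTneq hij => ->; rewrite e_irr.
have cij : ip (alpha i) (alpha j) = -1 by rewrite ip_aa cartan_adj.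
have cji : ip (alpha j) (alpha i) = -1 by rewrite ip_aa cartan_adj // e_sym.
have na : ip (alpha i) (alpha i) = 2 by rewrite ip_aa cartan_ii.
have nb : ip (alpha j) (alpha j) = 2 by rewrite ip_aa cartan_ii.
have nna : ip (- alpha i) (- alpha i) = 2 by rewrite ipNl ipNr opprK.
have rji : refl e j (alpha i) = alpha i + alpha j.
  by rewrite reflE cij scaleN1r opprK.
case hai: (alpha i \in rset e j B).
  have [_ [x hx ex]] := (mem_rset _ _ _).1 hai.
  have : x = refl e j (alpha i) \/ x = - refl e j (alpha i).
    by case: ex => ex; [left|right]; rewrite ex ?reflN reflK ?opprK.
  rewrite rji => -[<-//|ex']; exfalso.
  have := (gB.1 x hx).1; rewrite ex' => /forallP /(_ i).
  by rewrite !mxE !eqxx (negbTE nij).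
move/negbT: hai => hai.
have hC0 : forall g, g \in rset e j B -> ip g (alpha i) = 0.
  move=> g hg; apply/eqP; apply: contraT => sn.
  have [pg ng] := gC.1 g hg.
  have gi : g != alpha i by apply: contraNneq hai => <-.
  have gni : g != - alpha i by apply: contraNneq (alpha_npos i) => <-.
  have s1 := ip_le1 _ _ ng na gi.
  have s2 := ip_le1 _ _ ng nna gni; rewrite ipNr in s2.
  have ss : ip g (alpha i) * ip g (alpha i) = 1 by move/eqP: sn => sn; nia.
  by have := rset_moved _ _ _ gC hg ss; rewrite hcomm hg.
have h3 : forall b, b \in B -> ip b (alpha i) = - ip b (alpha j).
  move=> b hb; have [pb nb'] := gB.1 b hb.
  have nr : ip (refl e j b) (refl e j b) = 2 by rewrite refl_inv.
  have : ip (refl e j b) (alpha i) = 0.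
    case: (norm2_sign _ nr) => hs.
      by apply: hC0; apply/mem_rset; split=> //; exists b => //; left.
    rewrite -[refl e j b]opprK ipNl (hC0 (- refl e j b)) ?oppr0 //.
    by apply/mem_rset; split=> //; exists b => //; right.
  rewrite reflE ipBl ipZl cji => h; lia.
have aiB : alpha i \notin B.
  by apply/negP => h; have := h3 _ h; rewrite na cij; lia.
have ajB : alpha j \notin B.
  by apply/negP => h; have := h3 _ h; rewrite nb cji; lia.
have [b hb [hb1 hbm]] := extract _ _ gB aiB Qi.
have [b' hb' [hb1' hbm']] := extract _ _ gB ajB Qj.
have hbj := h3 b hb; rewrite hb1 in hbj.
have hb'i := h3 b' hb'; rewrite hb1' in hb'i.
have nbb : b != b'.
  by apply/eqP => ebb; subst b'; move: hb1; rewrite hb'i; lia.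
have ss1 : ip b' (alpha i) * ip b' (alpha i) = 1 by rewrite hb'i.
have ss2 : ip b (alpha j) * ip b (alpha j) = 1.
  have -> : ip b (alpha j) = -1 by lia.
  by [].
have h1 := hbm b' hb' (rset_moved _ _ _ gB hb' ss1).
have h2 := hbm' b hb (rset_moved _ _ _ gB hb ss2).
have e1 := gB.2 b b' hb hb' nbb.
have e2 : ip b' b = 0 by rewrite ipC.
have n1 := (gB.1 b hb).2.
have n2 := (gB.1 b' hb').2.
have f1 : ip (alpha i) b = 1 by rewrite ipC.
have f2 : ip (alpha j) b = -1 by rewrite ipC; lia.
have f3 : ip (alpha i) b' = -1 by rewrite ipC.
have f4 : ip (alpha j) b' = 1 by rewrite ipC.
set v := b - b' - alpha i + alpha j.
have nv : ip v v = 2.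
  rewrite /v !(ipDl, ipDr, ipBl, ipBr, ipNl, ipNr); lia.
have hv : height v = 0.
  rewrite /v !(heightD, heightB, heightN) !height_alpha; lia.
case: (norm2_sign _ nv) => hs.
  by have := norm2_neq0 _ nv; rewrite (pos_h0 _ hs hv) eqxx.
have := norm2_neq0 _ nv.
by rewrite -[v]opprK (pos_h0 _ hs) ?oppr0 ?eqxx // heightN hv oppr0.
Qed.

End Aux.

Local Open Scope fset_scope.

Theorem lemma3p2 (n : nat) (e : rel 'I_n)
  (e_sym : symmetric e) (e_irr : irreflexive e)
  (sph : spherical e)
  (B0 : {fset 'rV[int]_n}) (hB0 : orth_pos_set e B0)
  (adm : admissible e B0)
  (B : {fset 'rV[int]_n}) (hB : in_Worbit e B0 B)
  (i j : 'I_n) (hij : e i j)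
  (hcomm : rset e i (rset e j B) = rset e j B)
  (hi : mlt e B0 (rset e i B) B)
  (hj : mlt e B0 (rset e j B) B) :
  (alpha i + alpha j)%R \in B.
Proof.
have Qi := mlt_Q n e B0 (rset e i B) B hi.
have Qj := mlt_Q n e B0 (rset e j B) B hj.
exact: (main_aux n e e_sym e_irr sph B0 B i j hB0 hB hij hcomm Qi Qj).
Qed.
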